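(* Let $K(u)\in\mathrm{End}(\mathbb C^d\otimes\mathbb C^{d_B})$ be an irreducible K-matrix in the representation $(\rho^{(1)},\rho^{(2)})$ with asymptotic expansion $K(u)=\tilde\kappa+O(u^{-1})$, $\tilde\kappa\in\mathrm{End}(\mathbb C^d\otimes\mathbb C^{d_B})$. Then $\tilde\kappa=\kappa\otimes1$ for some $\kappa\in\mathrm{End}(\mathbb C^d)$.
   Context: Let $\mathfrak g$ be a complex simple Lie algebra with basis $\{X_A\}$, Killing form $B_{AB}=\mathrm{Tr}(\mathrm{ad}_{X_A}\circ\mathrm{ad}_{X_B})$ and inverse $B^{AB}$ (repeated indices summed). Let $\rho^{(1)},\rho^{(2)}:\mathfrak g\to\mathrm{End}(\mathbb C^d)$ be faithful representations and $C^{(ij)}=B^{AB}\rho^{(i)}(X_A)\otimes\rho^{(j)}(X_B)$. For $i,j\in\{1,2\}$ let $R^{(ij)}(u)\in\mathrm{End}(\mathbb C^d\otimes\mathbb C^d)$ be quasi-classical R-matrices: they satisfy $R^{(ij)}_{12}(u)R^{(ik)}_{13}(u+v)R^{(jk)}_{23}(v)=R^{(jk)}_{23}(v)R^{(ik)}_{13}(u+v)R^{(ij)}_{12}(u)$ and $R^{(ij)}(u)=1+\frac1u C^{(ij)}+O(u^{-2})$ as $u\to\infty$. Lower indices denote tensor factors of $\mathbb C^d\otimes\mathbb C^d\otimes\mathbb C^{d_B}$, and $R_{21}=P_{12}R_{12}P_{12}$ with $P$ the flip. A K-matrix in the representation $(\rho^{(1)},\rho^{(2)})$ with boundary space $\mathbb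 C^{d_B}$ is $K(u)\in\mathrm{End}(\mathbb C^d\otimes\mathbb C^{d_B})$, with an asymptotic expansion in powers of $1/u$, satisfying the boundary Yang–Baxter equation $R^{(11)}_{12}(u-v)K_{13}(u)R^{(12)}_{21}(u+v)K_{23}(v)=K_{23}(v)R^{(12)}_{12}(u+v)K_{13}(u)R^{(22)}_{21}(u-v)$. Writing $K(u)=\sum_{i,j}E_{ij}\otimes\Psi^{ij}(u)$ with $E_{ij}$ the elementary matrices of $\mathrm{End}(\mathbb C^d)$ and $\Psi^{ij}(u)\in\mathrm{End}(\mathbb C^{d_B})$, $K$ is irreducible if there is no proper nonzero subspace of $\mathbb C^{d_B}$ invariant under all $\Psi^{ij}(u)$ (all $i,j$ and $u$). *)

(* Defs.v *)
From HB Require Import structures.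
From mathcomp Require Import all_boot all_order all_algebra.
From mathcomp Require Import reals.
From mathcomp.real_closed Require Export complex mxtens.

Set Implicit Arguments.
Unset Strict Implicit.
Unset Printing Implicit Defensive.
Import Order.TTheory GRing.Theory Num.Theory.
Local Open Scope ring_scope.

Section Defs.
Variable C : numClosedFieldType.

(* ---------- Lie algebra given by a basis X_A (A : 'I_n) and structure
   constants:  [X_A, X_B] = \sum_C f A B C X_C. ---------- *)

Definition is_lie_algebra n (f : 'I_n -> 'I_n -> 'I_n -> C) : Prop :=
  (forall A B D, f A B D = - f B A D) /\
  (forall A D, f A A D = 0) /\
  (* Jacobi: [X_A,[X_B,X_D]] + [X_B,[X_D,X_A]] + [X_D,[X_A,X_B]] = 0 *)
  (forall A B D E,
      \sum_(G < n) (f B D G * f A G E + f D A G * f B G E + f A B G * f D G E) = 0).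

(* matrix of ad(X_A) in the basis (column-vector convention):
   ad(X_A) X_B = \sum_D f A B D X_D *)
Definition ad_mx n (f : 'I_n -> 'I_n -> 'I_n -> C) (A : 'I_n) : 'M[C]_n :=
  \matrix_(D, B) f A B D.

(* an ideal: subspace (spanned by the rows of U, as coefficient vectors)
   stable under all ad(X_A) *)
Definition is_ideal n (f : 'I_n -> 'I_n -> 'I_n -> C) (U : 'M[C]_n) : Prop :=
  forall A, stablemx U (ad_mx f A)^T.

Definition is_simple_lie_algebra n (f : 'I_n -> 'I_n -> 'I_n -> C) : Prop :=
  is_lie_algebra f /\
  (exists A B D, f A B D != 0) /\
  (forall U : 'M[C]_n, is_ideal f U -> U = 0 \/ row_full U).

Definition killing n (f : 'I_n -> 'I_n -> 'I_n -> C) : 'M[C]_n :=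
  \matrix_(A, B) \tr (ad_mx f A *m ad_mx f B).
Definition killing_inv n (f : 'I_n -> 'I_n -> 'I_n -> C) : 'M[C]_n :=
  invmx (killing f).

Definition is_rep n (f : 'I_n -> 'I_n -> 'I_n -> C) d (rho : 'I_n -> 'M[C]_d)
  : Prop :=
  forall A B, rho A *m rho B - rho B *m rho A = \sum_(D < n) f A B D *: rho D.

Definition is_faithful n d (rho : 'I_n -> 'M[C]_d) : Prop :=
  forall c : 'I_n -> C, \sum_(A < n) c A *: rho A = 0 -> forall A, c A = 0.

Definition casimir n (f : 'I_n -> 'I_n -> 'I_n -> C) d1 d2
  (rho1 : 'I_n -> 'M[C]_d1) (rho2 : 'I_n -> 'M[C]_d2) : 'M[C]_(d1 * d2) :=
  \sum_(A < n) \sum_(B < n) killing_inv f A B *: tensmx (rho1 A) (rho2 B).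

(* ---------- legs in a triple tensor product V1 (x) V2 (x) V3 ----------
   index of V1 (x) V2 (x) V3 is 'I_(a * b * c) = 'I_((a * b) * c),
   with (i1,i2,i3) |-> mxtens_index (mxtens_index (i1,i2), i3). *)

Definition idx1 a b c (I : 'I_(a * b * c)) : 'I_a :=
  (mxtens_unindex (mxtens_unindex I).1).1.
Definition idx2 a b c (I : 'I_(a * b * c)) : 'I_b :=
  (mxtens_unindex (mxtens_unindex I).1).2.
Definition idx3 a b c (I : 'I_(a * b * c)) : 'I_c := (mxtens_unindex I).2.

Definition leg12 a b c (X : 'M[C]_(a * b)) : 'M[C]_(a * b * c) :=
  \matrix_(I, J) (X (mxtens_index (idx1 I, idx2 I)) (mxtens_index (idx1 J, idx2 J))
                  * (idx3 I == idx3 J)%:R).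
Definition leg13 a b c (X : 'M[C]_(a * c)) : 'M[C]_(a * b * c) :=
  \matrix_(I, J) (X (mxtens_index (idx1 I, idx3 I)) (mxtens_index (idx1 J, idx3 J))
                  * (idx2 I == idx2 J)%:R).
Definition leg23 a b c (X : 'M[C]_(b * c)) : 'M[C]_(a * b * c) :=
  \matrix_(I, J) (X (mxtens_index (idx2 I, idx3 I)) (mxtens_index (idx2 J, idx3 J))
                  * (idx1 I == idx1 J)%:R).
(* X_{21} = P_{12} X_{12} P_{12}: first tensor factor of X on V2, second on V1 *)
Definition leg21 a b c (X : 'M[C]_(b * a)) : 'M[C]_(a * b * c) :=
  \matrix_(I, J) (X (mxtens_index (idx2 I, idx1 I)) (mxtens_index (idx2 J, idx1 J))
                  * (idx3 I == idx3 J)%:R).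

Definition bigO_inf m p (F : C -> 'M[C]_(m, p)) (k : nat) : Prop :=
  exists M r : C, 0 <= M /\ 0 <= r /\
    forall u : C, r < `|u| -> forall i j, `|F u i j| <= M / `|u| ^+ k.

Definition has_asymptotic_expansion m p (F : C -> 'M[C]_(m, p)) : Prop :=
  exists coef : nat -> 'M[C]_(m, p),
    forall N : nat,
      bigO_inf (fun u => F u - \sum_(k < N) u ^- k *: coef k) N.

(* ---------- R-matrices and K-matrices ----------
   Functions C -> matrices; the (finite) set S collects the possible poles:
   the functional equations are required where all arguments avoid S. *)

Definition YBE_family d (S : seq C) (R : 'I_2 -> 'I_2 -> C -> 'M[C]_(d * d))
  : Prop :=
  forall (i j k : 'I_2) (u v : C),
    u \notin S -> v \notin S -> u + v \notin S ->
    @leg12 d d d (R i j u) *m @leg13 d d d (R i k (u + v)) *m @leg23 d d d (R j k v)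
    = @leg23 d d d (R j k v) *m @leg13 d d d (R i k (u + v)) *m @leg12 d d d (R i j u).

Definition quasi_classical n (f : 'I_n -> 'I_n -> 'I_n -> C) d
  (rho : 'I_2 -> 'I_n -> 'M[C]_d) (R : 'I_2 -> 'I_2 -> C -> 'M[C]_(d * d))
  : Prop :=
  forall i j : 'I_2,
    bigO_inf (fun u => R i j u - 1 - u^-1 *: casimir f (rho i) (rho j)) 2.

Definition BYBE d dB (S : seq C) (R : 'I_2 -> 'I_2 -> C -> 'M[C]_(d * d))
  (K : C -> 'M[C]_(d * dB)) : Prop :=
  forall u v : C,
    u \notin S -> v \notin S -> u + v \notin S -> u - v \notin S ->
    @leg12 d d dB (R 0 0 (u - v)) *m @leg13 d d dB (K u)
      *m @leg21 d d dB (R 0 1 (u + v)) *m @leg23 d d dB (K v)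
    = @leg23 d d dB (K v) *m @leg12 d d dB (R 0 1 (u + v))
      *m @leg13 d d dB (K u) *m @leg21 d d dB (R 1 1 (u - v)).

(* K(u) = \sum_{i,j} E_{ij} (x) Psi^{ij}(u) *)
Definition Psi d dB (K : C -> 'M[C]_(d * dB)) (u : C) (i j : 'I_d) : 'M[C]_dB :=
  \matrix_(k, l) K u (mxtens_index (i, k)) (mxtens_index (j, l)).

(* irreducible: no proper nonzero subspace of C^{dB} (spanned by the rows of U,
   read as column vectors) is invariant under all Psi^{ij}(u), u off the poles *)
Definition K_irreducible d dB (S : seq C) (K : C -> 'M[C]_(d * dB)) : Prop :=
  forall U : 'M[C]_dB,
    (forall (i j : 'I_d) (u : C), u \notin S -> stablemx U (Psi K u i j)^T) ->
    U = 0 \/ row_full U.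

End Defs.

Arguments leg12 {C} a b c X.
Arguments leg13 {C} a b c X.
Arguments leg23 {C} a b c X.
Arguments leg21 {C} a b c X.

(* Main.v *)
From HB Require Import structures.
From mathcomp Require Import all_boot all_order all_algebra.
From mathcomp Require Import ring zify.
Require Import Defs.
From mathcomp Require Import reals.
From mathcomp.real_closed Require Import complex mxtens.
Set Implicit Arguments.
Unset Strict Implicit.
Unset Printing Implicit Defensive.
Import Order.TTheory GRing.Theory Num.Theory.
Local Open Scope ring_scope.

Section Dom.
Variable C : numFieldType.

Definition dom (P : C -> Prop) m p (F : C -> 'M[C]_(m, p)) (k : nat) : Prop :=
  exists M r : C, 0 <= M /\ 0 <= r /\
    forall u : C, P u -> r < `|u| -> forall i j, `|F u i j| <= M / `|u| ^+ k.

Lemma lt_addr_l (r1 r2 x : C) : 0 <= r2 -> r1 + r2 < x -> r1 < x.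
Proof. by move=> h2; apply: le_lt_trans; rewrite lerDl. Qed.
Lemma lt_addr_r (r1 r2 x : C) : 0 <= r1 -> r1 + r2 < x -> r2 < x.
Proof. by move=> h1; rewrite addrC; apply: lt_addr_l. Qed.

Lemma dom_ext P m p (F G : C -> 'M[C]_(m, p)) k :
  (forall u, P u -> F u = G u) -> dom P F k -> dom P G k.
Proof.
move=> e [M [r [M0 [r0 H]]]]; exists M, r; split=> // ; split=> // u Pu ru i j.
by rewrite -e //; apply: H.
Qed.

Lemma dom_weakP (P Q : C -> Prop) m p (F : C -> 'M[C]_(m, p)) k :
  (forall u, P u -> Q u) -> dom Q F k -> dom P F k.
Proof.
move=> e [M [r [M0 [r0 H]]]]; exists M, r; split=> // ; split=> // u Pu ru i j.
by apply: H => //; apply: e.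
Qed.

Lemma dom_add P m p (F G : C -> 'M[C]_(m, p)) k :
  dom P F k -> dom P G k -> dom P (fun u => F u + G u) k.
Proof.
move=> [M1 [r1 [M10 [r10 H1]]]] [M2 [r2 [M20 [r20 H2]]]].
exists (M1 + M2), (r1 + r2); split; first exact: addr_ge0.
split; first exact: addr_ge0.
move=> u Pu ru i j; rewrite mxE mulrDl.
apply: le_trans (ler_normD _ _) _; apply: lerD.
  by apply: H1 => //; apply: lt_addr_l ru.
by apply: H2 => //; apply: lt_addr_r ru.
Qed.

Lemma dom_opp P m p (F : C -> 'M[C]_(m, p)) k :
  dom P F k -> dom P (fun u => - F u) k.
Proof.
move=> [M [r [M0 [r0 H]]]]; exists M, r; split=> // ; split=> // u Pu ru i j.
by rewrite mxE normrN; apply: H.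
Qed.

Lemma dom_sub P m p (F G : C -> 'M[C]_(m, p)) k :
  dom P F k -> dom P G k -> dom P (fun u => F u - G u) k.
Proof. by move=> hF hG; apply: dom_add => //; apply: dom_opp. Qed.

Lemma dom_const P m p (X : 'M[C]_(m, p)) : dom P (fun _ => X) 0.
Proof.
exists (\sum_i \sum_j `|X i j|), 0; split; first by apply: sumr_ge0 => i _; apply: sumr_ge0.
split=> // u _ _ i j; rewrite expr0 divr1.
rewrite (bigD1 i) //= (bigD1 j) //= -addrA lerDl.
apply: addr_ge0; first by apply: sumr_ge0.
by apply: sumr_ge0 => *; apply: sumr_ge0.
Qed.

Lemma dom_mul P m n p (F : C -> 'M[C]_(m, n)) (G : C -> 'M[C]_(n, p)) k1 k2 :
  dom P F k1 -> dom P G k2 -> dom P (fun u => F u *m G u) (k1 + k2).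
Proof.
move=> [M1 [r1 [M10 [r10 H1]]]] [M2 [r2 [M20 [r20 H2]]]].
exists ((M1 * M2) *+ n), (r1 + r2); split; first by apply: mulrn_wge0; apply: mulr_ge0.
split; first exact: addr_ge0.
move=> u Pu ru i j; rewrite mxE.
apply: le_trans (ler_norm_sum _ _ _) _.
apply: (@le_trans _ _ (\sum_(l < n) (M1 / `|u| ^+ k1) * (M2 / `|u| ^+ k2))).
  apply: ler_sum => l _; rewrite normrM; apply: ler_pM => //.
    by apply: H1 => //; apply: lt_addr_l ru.
  by apply: H2 => //; apply: lt_addr_r ru.
rewrite sumr_const card_ord exprD invfM.
rewrite le_eqVlt; apply/orP; left; apply/eqP; ring.
Qed.

Lemma dom_weak P m p (F : C -> 'M[C]_(m, p)) k : dom P F k.+1 -> dom P F k.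
Proof.
move=> [M [r [M0 [r0 H]]]]; exists M, (r + 1); split=> //; split; first exact: addr_ge0.
move=> u Pu ru i j.
have u1 : 1 < `|u| by apply: lt_addr_r ru.
have u0 : 0 < `|u| by apply: lt_trans u1.
apply: le_trans (H u Pu (lt_addr_l ler01 ru) i j) _.
rewrite exprS invfM mulrA [M * _]mulrC -mulrA.
have hk : 0 <= M / `|u| ^+ k by apply: divr_ge0 => //; apply: exprn_ge0.
rewrite mulrC ler_pdivrMr //; exact: ler_peMr (ltW u1).
Qed.

Lemma dom_scale_inv P m p (X : 'M[C]_(m, p)) : dom P (fun u => u^-1 *: X) 1.
Proof.
have [M [r [M0 [r0 H]]]] := dom_const P X.
exists M, r; split=> //; split=> // u Pu ru i j.
rewrite mxE normrM normfV expr1 mulrC; apply: ler_wpM2r.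
  by rewrite invr_ge0.
by have := H u Pu ru i j; rewrite expr0 divr1.
Qed.

Lemma dom_shift (P Q : C -> Prop) m p (F : C -> 'M[C]_(m, p)) (c : C) :
  dom P F 1 -> (forall u, Q u -> P (u + c)) -> dom Q (fun u => F (u + c)) 1.
Proof.
move=> [M [r [M0 [r0 H]]]] PQ.
exists (M *+ 2), (r + `|c| *+ 2); split; first exact: mulrn_wge0.
split; first by apply: addr_ge0 => //; apply: mulrn_wge0.
move=> u Qu ru i j.
have hc : `|c| *+ 2 < `|u| by apply: lt_addr_r ru.
have h1 : `|u| <= `|u + c| + `|c|.
  by rewrite -{1}[u](addrK c); apply: ler_normB.
have h2 : `|u| <= `|u + c| *+ 2.
  rewrite -(lerD2r `|u|); apply: (@le_trans _ _ (`|u + c| *+ 2 + `|c| *+ 2)).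
    by rewrite -mulrnDl mulr2n; apply: lerD.
  by rewrite lerD2l; apply: ltW.
have ha : 0 < `|u| by apply: le_lt_trans hc; apply: mulrn_wge0.
have hb : 0 < `|u + c|.
  by rewrite lt_def normr_ge0 andbT normr_eq0; apply/eqP => e; move: h2; rewrite e normr0 mul0rn => h; by rewrite (le_gtF h) in ha.
have h4 : r < `|u + c|.
  rewrite -(ltrD2r `|c|); apply: lt_le_trans h1. 
  apply: le_lt_trans ru; rewrite lerD2l mulr2n lerDl //.
apply: le_trans (H _ (PQ _ Qu) h4 i j) _.
rewrite !expr1 ler_pdivrMr //.
have -> : M *+ 2 / `|u| * `|u + c| = (M * (`|u + c| *+ 2)) / `|u| by rewrite mulrnAr !mulrnAl mulrAC.
rewrite ler_pdivlMr //; exact: ler_wpM2l.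
Qed.


Lemma dom_zero P m p (X : 'M[C]_(m, p)) :
  dom P (fun _ => X) 1 -> (forall B : C, 0 <= B -> exists u, P u /\ B < `|u|) -> X = 0.
Proof.
move=> [M [r [M0 [r0 H]]]] unb; apply/matrixP => i j; rewrite mxE.
apply/eqP; rewrite -normr_eq0; apply/negPn/negP => nz.
have xp : 0 < `|X i j| by rewrite lt_def nz normr_ge0.
have [u [Pu Bu]] := unb (r + M / `|X i j|) (addr_ge0 r0 (divr_ge0 M0 (ltW xp))).
have ru : r < `|u| by apply: lt_addr_l Bu; apply: divr_ge0 => //; apply: ltW.
have := H u Pu ru i j; rewrite expr1.
have up : 0 < `|u| by apply: le_lt_trans ru.
rewrite ler_pdivlMr //.
have : M / `|X i j| < `|u| by apply: lt_addr_r Bu.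
by rewrite ltr_pdivrMr // mulrC => h1 h2; move: (lt_le_trans h1 h2); rewrite ltxx.
Qed.

Lemma unbounded (S : seq C) (v B : C) : 0 <= B ->
  exists u, (u \notin S /\ u + v \notin S /\ u - v \notin S) /\ B < `|u|.
Proof.
move=> B0; set Sg := \sum_(s <- S) (`|s| + `|v|).
have Sg0 : 0 <= Sg by apply: sumr_ge0 => s _; apply: addr_ge0.
have hS : forall s, s \in S -> `|s| + `|v| <= Sg.
  move=> s sS; rewrite /Sg (big_rem s) //= lerDl; apply: sumr_ge0 => *; apply: addr_ge0; apply: normr_ge0.
set u := B + (1 + Sg).
have u0 : 0 <= u by apply: addr_ge0 => //; apply: addr_ge0.
have Su : Sg < `|u| by rewrite ger0_norm // /u addrA ltr_pwDl // ltr_pwDr // ler_wpDl.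
have key : forall x, x \in S -> `|u| <= `|x| + `|v| -> False.
  by move=> x xS h; move: (le_lt_trans (le_trans h (hS x xS)) Su); rewrite ltxx.
exists u; split; last by rewrite ger0_norm // /u ltr_pwDr // ltr_pwDl.
split; [|split].
- apply/negP => uS; apply: (key u uS); rewrite lerDl //.
- apply/negP => uS; apply: (key _ uS).
  by rewrite -{1}[u](addrK v); apply: ler_normB.
- apply/negP => uS; apply: (key _ uS).
  by rewrite -{1}[u](subrK v); apply: ler_normD.
Qed.

End Dom.

Section Alg.
Variable C : numClosedFieldType.

Lemma schur n (z : 'I_n) (k : 'M[C]_n) (Fam : 'M[C]_n -> Prop) :
  (forall U : 'M[C]_n, (forall Ps, Fam Ps -> stablemx U Ps^T) -> U = 0 \/ row_full U) ->
  (forall Ps, Fam Ps -> k *m Ps = Ps *m k) -> k = (k z z)%:M.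
Proof.
move=> irr com.
have [l hl] : exists l, root (char_poly k^T) l.
  apply/closed_rootP; rewrite size_char_poly; by case: n z {irr com k Fam} => [[]|].
have ev : eigenvalue k^T l by rewrite eigenvalue_root_char.
have st : forall Ps, Fam Ps -> stablemx (eigenspace k^T l) Ps^T.
  move=> Ps FP; apply: comm_mx_stable_eigenspace.
  by rewrite /comm_mx -!trmx_mul com.
have kl : k = l%:M.
  case: (irr _ st) => [U0|full]; first by move: ev; rewrite /eigenvalue U0 eqxx.
  move: full; rewrite /row_full /eigenspace mxrank_ker => /eqP h.
  have r0 : \rank (k^T - l%:M) = 0%N.
    have aux : forall r : nat, (r <= n)%N -> (n - r)%N = n -> r = 0%N by move=> *; lia.
    by apply: aux h; apply: rank_leq_row.
  move/eqP: r0; rewrite mxrank_eq0 subr_eq0 => /eqP kT.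
  by rewrite -[k]trmxK kT tr_scalar_mx.
by rewrite {2}kl mxE eqxx mulr1n.
Qed.

Lemma idx1E a b c (i : 'I_a) (j : 'I_b) (k : 'I_c) :
  idx1 (mxtens_index (mxtens_index (i, j), k)) = i.
Proof. by rewrite /idx1 !mxtens_indexK. Qed.
Lemma idx2E a b c (i : 'I_a) (j : 'I_b) (k : 'I_c) :
  idx2 (mxtens_index (mxtens_index (i, j), k)) = j.
Proof. by rewrite /idx2 !mxtens_indexK. Qed.
Lemma idx3E a b c (i : 'I_a) (j : 'I_b) (k : 'I_c) :
  idx3 (mxtens_index (mxtens_index (i, j), k)) = k.
Proof. by rewrite /idx3 !mxtens_indexK. Qed.

Lemma sum_tens m n (F : 'I_(m * n) -> C) :
  \sum_(L < m * n) F L = \sum_(a < m) \sum_(b < n) F (mxtens_index (a, b)).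
Proof.
rewrite pair_big /= (reindex (@mxtens_index m n)) /=; first by apply: eq_bigr => -[a b].
by exists (@mxtens_unindex m n) => x _; rewrite (mxtens_indexK, mxtens_unindexK).
Qed.

Lemma sum_delta m (j : 'I_m) (G : 'I_m -> C) :
  (forall l, l != j -> G l = 0) -> \sum_l G l = G j.
Proof. by move=> h; rewrite (bigD1 j) //= big1 ?addr0. Qed.

Lemma normr_ind (x : C) (b : bool) : `|x * b%:R| <= `|x|.
Proof. by case: b; rewrite ?mulr1 // mulr0 normr0. Qed.

Lemma eqind (T : eqType) (x y : T) : x != y -> (x == y)%:R = 0 :> C.
Proof. by move/negbTE => ->. Qed.

End Alg.

Section Legs.
Variable C : numClosedFieldType.

Lemma dom_leg12 (P : C -> Prop) a b c (F : C -> 'M[C]_(a * b)) k :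
  dom P F k -> dom P (fun u => leg12 a b c (F u)) k.
Proof.
move=> [M [r [M0 [r0 H]]]]; exists M, r; split=> //; split=> // u Pu ru i j.
by rewrite mxE; apply: le_trans (normr_ind _ _) _; apply: H.
Qed.
Lemma dom_leg13 (P : C -> Prop) a b c (F : C -> 'M[C]_(a * c)) k :
  dom P F k -> dom P (fun u => leg13 a b c (F u)) k.
Proof.
move=> [M [r [M0 [r0 H]]]]; exists M, r; split=> //; split=> // u Pu ru i j.
by rewrite mxE; apply: le_trans (normr_ind _ _) _; apply: H.
Qed.
Lemma dom_leg23 (P : C -> Prop) a b c (F : C -> 'M[C]_(b * c)) k :
  dom P F k -> dom P (fun u => leg23 a b c (F u)) k.
Proof.
move=> [M [r [M0 [r0 H]]]]; exists M, r; split=> //; split=> // u Pu ru i j.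
by rewrite mxE; apply: le_trans (normr_ind _ _) _; apply: H.
Qed.
Lemma dom_leg21 (P : C -> Prop) a b c (F : C -> 'M[C]_(b * a)) k :
  dom P F k -> dom P (fun u => leg21 a b c (F u)) k.
Proof.
move=> [M [r [M0 [r0 H]]]]; exists M, r; split=> //; split=> // u Pu ru i j.
by rewrite mxE; apply: le_trans (normr_ind _ _) _; apply: H.
Qed.

Lemma leg12B a b c (X Y : 'M[C]_(a * b)) :
  leg12 a b c (X - Y) = leg12 a b c X - leg12 a b c Y.
Proof. by apply/matrixP => I J; rewrite !mxE mulrBl. Qed.
Lemma leg13B a b c (X Y : 'M[C]_(a * c)) :
  leg13 a b c (X - Y) = leg13 a b c X - leg13 a b c Y.
Proof. by apply/matrixP => I J; rewrite !mxE mulrBl. Qed.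
Lemma leg21B a b c (X Y : 'M[C]_(b * a)) :
  leg21 a b c (X - Y) = leg21 a b c X - leg21 a b c Y.
Proof. by apply/matrixP => I J; rewrite !mxE mulrBl. Qed.

Lemma tens_eq m n (x y : 'I_m * 'I_n) :
  (mxtens_index x == mxtens_index y) = (x == y).
Proof. exact: (inj_eq (can_inj (@mxtens_indexK m n))). Qed.

Lemma leg12_1 a b c : leg12 a b c (1%:M : 'M[C]_(a * b)) = 1%:M.
Proof.
apply/matrixP => I J.
rewrite -[I]mxtens_unindexK; case: (mxtens_unindex I) => I1 k.
rewrite -[I1]mxtens_unindexK; case: (mxtens_unindex I1) => i j.
rewrite -[J]mxtens_unindexK; case: (mxtens_unindex J) => J1 k'.
rewrite -[J1]mxtens_unindexK; case: (mxtens_unindex J1) => i' j'.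
rewrite !mxE !idx1E !idx2E !idx3E !tens_eq !xpair_eqE.
rewrite (inj_eq (can_inj (@mxtens_indexK _ _))) xpair_eqE.
by case: (i == i'); case: (j == j'); case: (k == k'); rewrite /= ?mulr1 ?mulr0 ?mul0r.
Qed.
Lemma leg21_1 a b c : leg21 a b c (1%:M : 'M[C]_(b * a)) = 1%:M.
Proof.
apply/matrixP => I J.
rewrite -[I]mxtens_unindexK; case: (mxtens_unindex I) => I1 k.
rewrite -[I1]mxtens_unindexK; case: (mxtens_unindex I1) => i j.
rewrite -[J]mxtens_unindexK; case: (mxtens_unindex J) => J1 k'.
rewrite -[J1]mxtens_unindexK; case: (mxtens_unindex J1) => i' j'.
rewrite !mxE !idx1E !idx2E !idx3E !tens_eq !xpair_eqE.
rewrite (inj_eq (can_inj (@mxtens_indexK _ _))) xpair_eqE.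
by case: (i == i'); case: (j == j'); case: (k == k'); rewrite /= ?mulr1 ?mulr0 ?mul0r.
Qed.

Definition blk d dB (X : 'M[C]_(d * dB)) (i j : 'I_d) : 'M[C]_dB :=
  \matrix_(k, l) X (mxtens_index (i, k)) (mxtens_index (j, l)).

Lemma extract1 d dB (Ka Kv : 'M[C]_(d * dB)) i a k j b l :
  (leg13 d d dB Ka *m leg23 d d dB Kv)
    (mxtens_index (mxtens_index (i, a), k)) (mxtens_index (mxtens_index (j, b), l))
  = (blk Ka i j *m blk Kv a b) k l.
Proof.
rewrite !mxE sum_tens sum_tens.
rewrite (@sum_delta _ _ j); last first.
  move=> l1 ne; apply: big1 => l2 _; apply: big1 => l3 _.
  by rewrite !mxE !idx1E !idx2E !idx3E (eqind _ ne) !mulr0.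
rewrite (@sum_delta _ _ a); last first.
  move=> l2 ne; apply: big1 => l3 _.
  by rewrite !mxE !idx1E !idx2E !idx3E eq_sym (eqind _ ne) !mulr0 mul0r.
apply: eq_bigr => l3 _.
by rewrite !mxE !idx1E !idx2E !idx3E !eqxx !mulr1.
Qed.

Lemma extract2 d dB (Ka Kv : 'M[C]_(d * dB)) i a k j b l :
  (leg23 d d dB Kv *m leg13 d d dB Ka)
    (mxtens_index (mxtens_index (i, a), k)) (mxtens_index (mxtens_index (j, b), l))
  = (blk Kv a b *m blk Ka i j) k l.
Proof.
rewrite !mxE sum_tens sum_tens.
rewrite (@sum_delta _ _ i); last first.
  move=> l1 ne; apply: big1 => l2 _; apply: big1 => l3 _.
  by rewrite !mxE !idx1E !idx2E !idx3E eq_sym (eqind _ ne) !mulr0 mul0r.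
rewrite (@sum_delta _ _ b); last first.
  move=> l2 ne; apply: big1 => l3 _.
  by rewrite !mxE !idx1E !idx2E !idx3E (eqind _ ne) !mulr0.
apply: eq_bigr => l3 _.
by rewrite !mxE !idx1E !idx2E !idx3E !eqxx !mulr1.
Qed.

End Legs.

Lemma bigO_dom (C : numClosedFieldType) (P : C -> Prop) m p (F : C -> 'M[C]_(m, p)) k :
  bigO_inf F k -> dom P F k.
Proof.
move=> [M [r [M0 [r0 H]]]]; exists M, r; split=> //; split=> // u _ ru; exact: H.
Qed.

Lemma prod3 (C : numClosedFieldType) (P : C -> Prop) N (A B D : C -> 'M[C]_N) (k0 : 'M[C]_N) :
  dom P (fun u => A u - 1%:M) 1 -> dom P (fun u => B u - k0) 1 -> dom P (fun u => D u - 1%:M) 1 ->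
  dom P (fun u => A u *m B u *m D u - k0) 1.
Proof.
move=> hA hB hD.
have hB0 : dom P B 0.
  apply: dom_ext (dom_add (dom_weak hB) (dom_const P k0)) => u _; exact: subrK.
have hD0 : dom P D 0.
  apply: dom_ext (dom_add (dom_weak hD) (dom_const P 1%:M)) => u _; exact: subrK.
have h1 : dom P (fun u => (A u - 1%:M) *m (B u *m D u)) 1 := dom_mul hA (dom_mul hB0 hD0).
have h2 : dom P (fun u => (B u - k0) *m D u) 1 := dom_mul hB hD0.
have h3 : dom P (fun u => k0 *m (D u - 1%:M)) 1 := dom_mul (dom_const P k0) hD.
apply: dom_ext (dom_add (dom_add h1 h2) h3) => u _.
rewrite !mulmxBl !mulmxBr mul1mx mulmx1 mulmxA.
by rewrite !addrA !subrK.
Qed.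

Lemma subsub (V : zmodType) (x y z : V) : (x - y) - (x - z) = z - y.
Proof. by rewrite opprB addrC addrA subrK. Qed.

Theorem corollary14 (R : realType) (n : nat) (f : 'I_n -> 'I_n -> 'I_n -> R[i])
    (d dB : nat) (rho : 'I_2 -> 'I_n -> 'M[R[i]]_d)
    (Rm : 'I_2 -> 'I_2 -> R[i] -> 'M[R[i]]_(d * d))
    (K : R[i] -> 'M[R[i]]_(d * dB)) (S : seq R[i])
    (kappa_t : 'M[R[i]]_(d * dB)) :
  is_simple_lie_algebra f ->
  (forall a : 'I_2, is_rep f (rho a) /\ is_faithful (rho a)) ->
  YBE_family S Rm ->
  quasi_classical f rho Rm ->
  has_asymptotic_expansion K ->
  BYBE S Rm K ->
  K_irreducible S K ->
  bigO_inf (fun u => K u - kappa_t) 1 ->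
  exists kappa : 'M[R[i]]_d, kappa_t = tensmx kappa (1%:M : 'M[R[i]]_dB).
Proof.
move=> _ _ _ hq _ hB hirr hK.
pose C := R[i].
have hR : forall a b : 'I_2, dom (fun _ => True) (fun w => Rm a b w - 1%:M) 1.
  move=> a b; have := hq a b => hqab.
  have h2 : dom (fun _ => True) (fun w => Rm a b w - 1 - w^-1 *: casimir f (rho a) (rho b)) 2 := bigO_dom _ hqab.
  apply: dom_ext (dom_add (dom_weak h2) (dom_scale_inv _ (casimir f (rho a) (rho b)))) => u _.
  by rewrite subrK.
have hK1 : dom (fun _ => True) (fun u => K u - kappa_t) 1 := bigO_dom _ hK.
have comm : forall v, v \notin S ->
    leg23 d d dB (K v) *m leg13 d d dB kappa_t = leg13 d d dB kappa_t *m leg23 d d dB (K v).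
  move=> v vS.
  pose P := fun u : C => u \notin S /\ u + v \notin S /\ u - v \notin S.
  have sh : forall (a b : 'I_2) (c : C), dom P (fun u => Rm a b (u + c) - 1%:M) 1.
    by move=> a b c; apply: (dom_shift (hR a b)).
  have hA : dom P (fun u => leg12 d d dB (Rm 0 0 (u - v)) - 1%:M) 1.
    apply: dom_ext (dom_leg12 dB (sh 0 0 (- v))) => u _.
    by rewrite leg12B leg12_1.
  have hA' : dom P (fun u => leg12 d d dB (Rm 0 1 (u + v)) - 1%:M) 1.
    apply: dom_ext (dom_leg12 dB (sh 0 1 v)) => u _.
    by rewrite leg12B leg12_1.
  have hC : dom P (fun u => leg21 d d dB (Rm 0 1 (u + v)) - 1%:M) 1.
    apply: dom_ext (dom_leg21 dB (sh 0 1 v)) => u _.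
    by rewrite leg21B leg21_1.
  have hC' : dom P (fun u => leg21 d d dB (Rm 1 1 (u - v)) - 1%:M) 1.
    apply: dom_ext (dom_leg21 dB (sh 1 1 (- v))) => u _.
    by rewrite leg21B leg21_1.
  have hBk : dom P (fun u => leg13 d d dB (K u) - leg13 d d dB kappa_t) 1.
    apply: dom_ext (dom_leg13 d (dom_weakP (fun _ _ => I) hK1)) => u _.
    by rewrite leg13B.
  have L := prod3 hA hBk hC.
  have L' := prod3 hA' hBk hC'.
  pose D := leg23 d d dB (K v).
  have E := dom_sub (dom_mul L (dom_const P D)) (dom_mul (dom_const P D) L').
  have Z := dom_zero (dom_ext _ E) (fun B B0 => unbounded S v B0).
  apply/eqP; rewrite -subr_eq0; apply/eqP; apply: Z => u [uS [upS umS]].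
  rewrite mulmxBl mulmxBr !mulmxA.
  rewrite (hB u v uS vS upS umS).
  by rewrite subsub.
case: (posnP dB) => [dB0 | dBp].
  exists 0; apply/matrixP => I J.
  exfalso; case: (mxtens_unindex I) => _ [x hx]; by rewrite dB0 in hx.
pose z := Ordinal dBp.
exists (\matrix_(i, j) kappa_t (mxtens_index (i, z)) (mxtens_index (j, z))).
have sc : forall i j, blk kappa_t i j = (blk kappa_t i j z z)%:M.
  move=> i j; apply: (@schur C dB z _ (fun Ps => exists a b v, v \notin S /\ Ps = Psi K v a b)).
    move=> U hU; apply: hirr => a b v vS; apply: hU; by exists a, b, v.
  move=> Ps [a [b [v [vS ->]]]].
  apply/matrixP => k l.
  have := comm v vS.
  move/matrixP/(_ (mxtens_index (mxtens_index (i, a), k)) (mxtens_index (mxtens_index (j, b), l))).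
  by rewrite extract1 extract2 => ->.
apply/matrixP => I J.
rewrite -[I]mxtens_unindexK; case: (mxtens_unindex I) => i k.
rewrite -[J]mxtens_unindexK; case: (mxtens_unindex J) => j l.
rewrite tensmxE !mxE.
move/matrixP: (sc i j) => /(_ k l); rewrite !mxE => ->.
by rewrite mulr_natr.
Qed.
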